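(* Let $(T,[\cdot,\cdot],[\cdot,\cdot,\cdot],\alpha)$ be a Hom-Lie-Yamaguti algebra, and let $\nu:T\times T\to T$ be bilinear and $\omega:T\times T\times T\to T$ trilinear. For $\lambda\in\mathbb{K}$ set $$[x_1,x_2]_\lambda=[x_1,x_2]+\lambda\nu(x_1,x_2),\qquad [x_1,x_2,x_3]_\lambda=[x_1,x_2,x_3]+\lambda\omega(x_1,x_2,x_3).$$ Say that $(\nu,\omega)$ generates a $\lambda$-parameter infinitesimal deformation of $T$ if $(T,[\cdot,\cdot]_\lambda,[\cdot,\cdot,\cdot]_\lambda,\alpha)$ is a Hom-Lie-Yamaguti algebra for every $\lambda$. Then $(\nu,\omega)$ generates a $\lambda$-parameter infinitesimal deformation of $T$ if and only if the following two conditions hold: (i) $(T,\nu,\omega,\alpha)$ is a Hom-Lie-Yamaguti algebra of deformation type; (ii) $(\nu,\omega)$ is a (2,3)-cocycle of $T$ with coefficients in the adjoint representation.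
   Context: Throughout, vector spaces are over an algebraically closed field $\mathbb{K}$ of characteristic different from 2 and 3. A Hom-Lie-Yamaguti algebra (HLYA) is a vector space $T$ with a linear map $\alpha:T\to T$, a bilinear map $[\cdot,\cdot]$ and a trilinear map $[\cdot,\cdot,\cdot]$ on $T$ such that for all $x_i,y_i\in T$: (HLY01) $\alpha([x_1,x_2])=[\alpha(x_1),\alpha(x_2)]$; (HLY02) $\alpha([x_1,x_2,x_3])=[\alpha(x_1),\alpha(x_2),\alpha(x_3)]$; (HLY1) $[x_1,x_2]+[x_2,x_1]=0$; (HLY2) $[x_1,x_2,x_3]+[x_2,x_1,x_3]=0$; (HLY3) $\sum_{\mathrm{cyc}(x_1,x_2,x_3)}([[x_1,x_2],\alpha(x_3)]+[x_1,x_2,x_3])=0$; (HLY4) $[[x_1,x_2],\alpha(x_3),\alpha(y_1)]+[[x_2,x_3],\alpha(x_1),\alpha(y_1)]+[[x_3,x_1],\alpha(x_2),\alpha(y_1)]=0$; (HLY5) $[\alpha(x_1),\alpha(x_2),[y_1,y_2]]=[[x_1,x_2,y_1],\alpha^2(y_2)]+[\alpha^2(y_1),[x_1,x_2,y_2]]$; (HLY6) $[\alpha^2(x_1),\alpha^2(x_2),[y_1,y_2,y_3]]=[[x_1,x_2,y_1],\alpha^2(y_2),\alpha^2(y_3)]+[\alpha^2(y_1),[x_1,x_2,y_2],\alpha^2(y_3)]+[\alpha^2(y_1),\alpha^2(y_2),[x_1,x_2,y_3]]$. A HLYA of deformation type is a vector space $T$ with linear $\alpha:T\to T$, bilinear $\nu:T\times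 T\to T$ and trilinear $\omega:T^3\to T$ satisfying (HLY01), (HLY02), (HLY1), (HLY2), (HLY4), (HLY5), (HLY6) with $[\cdot,\cdot]$ replaced by $\nu$ and $[\cdot,\cdot,\cdot]$ replaced by $\omega$, and, instead of (HLY3), the condition (HLY3') $\nu(\nu(x_1,x_2),\alpha(x_3))+\nu(\nu(x_2,x_3),\alpha(x_1))+\nu(\nu(x_3,x_1),\alpha(x_2))=0$. The adjoint representation of the HLYA $(T,\alpha)$ is the representation on the Hom-vector space $(T,\alpha)$ given by $\rho(x_1)(x_2)=[x_1,x_2]$, $D(x_1,x_2)x_3=[x_1,x_2,x_3]$, $\theta(x_1,x_2)x_3=[x_3,x_1,x_2]$ (here $\beta=\alpha$). For a representation $(\rho,D,\theta)$ on $(V,\beta)$ (in particular the adjoint one), a (2,3)-cocycle is a pair $(\nu,\omega)$ of a bilinear map $\nu:T\times T\to V$ and a trilinear map $\omega:T^3\to V$ such that $\nu(x_1,x_2)=-\nu(x_2,x_1)$, $\omega(x_1,x_2,x_3)=-\omega(x_2,x_1,x_3)$, and for all $x_i,y_i\in T$: (CC01) $\nu(\alpha(x_1),\alpha(x_2))=\beta(\nu(x_1,x_2))$; (CC02) $\omega(\alpha(x_1),\alpha(x_2),\alpha(x_3))=\beta(\omega(x_1,x_2,x_3))$; (CC1) $\sum_{\mathrm{cyc}(x_1,x_2,x_3)}\big(\omega(x_1,x_2,x_3)-\rho(\alpha(x_1))\nu(x_2,x_3)+\nu([x_1,x_2],\alpha(x_3))\big)=0$; (CC2) $\sum_{\mathrm{cyc}(x_1,x_2,x_3)}\big(\theta(\alpha(x_1),\alpha(y_1))\nu(x_2,x_3)+\omega([x_1,x_2],\alpha(x_3),\alpha(y_1))\big)=0$;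 (CC3) $\omega(\alpha(x_1),\alpha(x_2),[y_1,y_2])+D(\alpha(x_1),\alpha(x_2))\nu(y_1,y_2)=\nu([x_1,x_2,y_1],\alpha^2(y_2))+\nu(\alpha^2(y_1),[x_1,x_2,y_2])+\rho(\alpha^2(y_1))\omega(x_1,x_2,y_2)-\rho(\alpha^2(y_2))\omega(x_1,x_2,y_1)$; (CC4) $\omega(\alpha^2(x_1),\alpha^2(x_2),[y_1,y_2,y_3])+D(\alpha^2(x_1),\alpha^2(x_2))\omega(y_1,y_2,y_3)=\omega([x_1,x_2,y_1],\alpha^2(y_2),\alpha^2(y_3))+\omega(\alpha^2(y_1),[x_1,x_2,y_2],\alpha^2(y_3))+\omega(\alpha^2(y_1),\alpha^2(y_2),[x_1,x_2,y_3])+\theta(\alpha^2(y_2),\alpha^2(y_3))\omega(x_1,x_2,y_1)-\theta(\alpha^2(y_1),\alpha^2(y_3))\omega(x_1,x_2,y_2)+D(\alpha^2(y_1),\alpha^2(y_2))\omega(x_1,x_2,y_3)$. *)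

(* Defs.v *)
From HB Require Import structures.
From mathcomp Require Import all_boot all_order all_algebra.
Set Implicit Arguments. Unset Strict Implicit. Unset Printing Implicit Defensive.
Import GRing.Theory.
Local Open Scope ring_scope.

Section HLYA.
Variables (K : fieldType) (T : lmodType K).

Definition lin_map (f : T -> T) : Prop :=
  forall (a : K) x y, f (a *: x + y) = a *: f x + f y.

Definition bilin (V : lmodType K) (f : T -> T -> V) : Prop :=
  (forall (a : K) x y z, f (a *: x + y) z = a *: f x z + f y z) /\
  (forall (a : K) x y z, f z (a *: x + y) = a *: f z x + f z y).

Definition trilin (V : lmodType K) (f : T -> T -> T -> V) : Prop :=
  (forall (a : K) x y z w, f (a *: x + y) z w = a *: f x z w + f y z w) /\
  (forall (a : K) x y z w, f z (a *: x + y) w = a *: f z x w + f z y w) /\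
  (forall (a : K) x y z w, f z w (a *: x + y) = a *: f z w x + f z w y).

Variables (alpha : T -> T) (br : T -> T -> T) (tr : T -> T -> T -> T).

Definition HLY01 := forall x1 x2, alpha (br x1 x2) = br (alpha x1) (alpha x2).
Definition HLY02 := forall x1 x2 x3,
  alpha (tr x1 x2 x3) = tr (alpha x1) (alpha x2) (alpha x3).
Definition HLY1 := forall x1 x2, br x1 x2 + br x2 x1 = 0.
Definition HLY2 := forall x1 x2 x3, tr x1 x2 x3 + tr x2 x1 x3 = 0.
Definition HLY3 := forall x1 x2 x3,
  (br (br x1 x2) (alpha x3) + tr x1 x2 x3)
  + (br (br x2 x3) (alpha x1) + tr x2 x3 x1)
  + (br (br x3 x1) (alpha x2) + tr x3 x1 x2) = 0.
Definition HLY3' := forall x1 x2 x3,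
  br (br x1 x2) (alpha x3) + br (br x2 x3) (alpha x1)
  + br (br x3 x1) (alpha x2) = 0.
Definition HLY4 := forall x1 x2 x3 y1,
  tr (br x1 x2) (alpha x3) (alpha y1) + tr (br x2 x3) (alpha x1) (alpha y1)
  + tr (br x3 x1) (alpha x2) (alpha y1) = 0.
Definition HLY5 := forall x1 x2 y1 y2,
  tr (alpha x1) (alpha x2) (br y1 y2)
  = br (tr x1 x2 y1) (alpha (alpha y2)) + br (alpha (alpha y1)) (tr x1 x2 y2).
Definition HLY6 := forall x1 x2 y1 y2 y3,
  tr (alpha (alpha x1)) (alpha (alpha x2)) (tr y1 y2 y3)
  = tr (tr x1 x2 y1) (alpha (alpha y2)) (alpha (alpha y3))
  + tr (alpha (alpha y1)) (tr x1 x2 y2) (alpha (alpha y3))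
  + tr (alpha (alpha y1)) (alpha (alpha y2)) (tr x1 x2 y3).

Definition is_HLYA : Prop :=
  [/\ lin_map alpha, bilin br, trilin tr,
      [/\ HLY01, HLY02, HLY1 & HLY2] &
      [/\ HLY3, HLY4, HLY5 & HLY6]].

Definition is_HLYA_deftype : Prop :=
  [/\ lin_map alpha, bilin br, trilin tr,
      [/\ HLY01, HLY02, HLY1 & HLY2] &
      [/\ HLY3', HLY4, HLY5 & HLY6]].

Definition cocycle23 (V : lmodType K) (beta : V -> V) (rho : T -> V -> V)
  (D theta : T -> T -> V -> V) (nu : T -> T -> V) (omega : T -> T -> T -> V) : Prop :=
  [/\ (forall x1 x2, nu x1 x2 = - nu x2 x1),
      (forall x1 x2 x3, omega x1 x2 x3 = - omega x2 x1 x3),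
      (forall x1 x2, nu (alpha x1) (alpha x2) = beta (nu x1 x2)),
      (forall x1 x2 x3,
         omega (alpha x1) (alpha x2) (alpha x3) = beta (omega x1 x2 x3)) &
   [/\
      (forall x1 x2 x3,
         (omega x1 x2 x3 - rho (alpha x1) (nu x2 x3) + nu (br x1 x2) (alpha x3))
       + (omega x2 x3 x1 - rho (alpha x2) (nu x3 x1) + nu (br x2 x3) (alpha x1))
       + (omega x3 x1 x2 - rho (alpha x3) (nu x1 x2) + nu (br x3 x1) (alpha x2))
       = 0),
      (forall x1 x2 x3 y1,
         (theta (alpha x1) (alpha y1) (nu x2 x3)
            + omega (br x1 x2) (alpha x3) (alpha y1))
       + (theta (alpha x2) (alpha y1) (nu x3 x1)
            + omega (br x2 x3) (alpha x1) (alpha y1))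
       + (theta (alpha x3) (alpha y1) (nu x1 x2)
            + omega (br x3 x1) (alpha x2) (alpha y1)) = 0),
      (forall x1 x2 y1 y2,
         omega (alpha x1) (alpha x2) (br y1 y2) + D (alpha x1) (alpha x2) (nu y1 y2)
         = nu (tr x1 x2 y1) (alpha (alpha y2)) + nu (alpha (alpha y1)) (tr x1 x2 y2)
           + rho (alpha (alpha y1)) (omega x1 x2 y2)
           - rho (alpha (alpha y2)) (omega x1 x2 y1)) &
      (forall x1 x2 y1 y2 y3,
         omega (alpha (alpha x1)) (alpha (alpha x2)) (tr y1 y2 y3)
           + D (alpha (alpha x1)) (alpha (alpha x2)) (omega y1 y2 y3)
         = omega (tr x1 x2 y1) (alpha (alpha y2)) (alpha (alpha y3))
           + omega (alpha (alpha y1)) (tr x1 x2 y2) (alpha (alpha y3))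
           + omega (alpha (alpha y1)) (alpha (alpha y2)) (tr x1 x2 y3)
           + theta (alpha (alpha y2)) (alpha (alpha y3)) (omega x1 x2 y1)
           - theta (alpha (alpha y1)) (alpha (alpha y3)) (omega x1 x2 y2)
           + D (alpha (alpha y1)) (alpha (alpha y2)) (omega x1 x2 y3))]].

Definition adj_rho : T -> T -> T := br.
Definition adj_D : T -> T -> T -> T := tr.
Definition adj_theta : T -> T -> T -> T := fun x1 x2 x3 => tr x3 x1 x2.

Definition cocycle23_adj (nu : T -> T -> T) (omega : T -> T -> T -> T) : Prop :=
  cocycle23 alpha adj_rho adj_D adj_theta nu omega.

End HLYA.

Definition gen_inf_deformation (K : fieldType) (T : lmodType K) (alpha : T -> T)
  (br : T -> T -> T) (tr : T -> T -> T -> T)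
  (nu : T -> T -> T) (omega : T -> T -> T -> T) : Prop :=
  forall lam : K,
    is_HLYA alpha (fun x1 x2 => br x1 x2 + lam *: nu x1 x2)
                  (fun x1 x2 x3 => tr x1 x2 x3 + lam *: omega x1 x2 x3).

(* Main.v *)
Require Import Defs.
From HB Require Import structures.
From mathcomp Require Import all_boot all_order all_algebra.
Local Open Scope ring_scope.
Import GRing.Theory.
Set Implicit Arguments. Unset Strict Implicit.

Section Aux.
Variables (K : fieldType) (T : lmodType K).

Definition P (l : K) (a b c : T) := a + l *: b + (l * l) *: c.

Lemma lin0 (f : T -> T) : lin_map f -> f 0 = 0.
Proof. by move=> Hf; have := Hf (-1) 0 0; rewrite scaler0 addr0 scaleN1r addNr. Qed.

Lemma linD (f : T -> T) : lin_map f -> forall x y, f (x + y) = f x + f y.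
Proof. by move=> Hf x y; have := Hf 1 x y; rewrite !scale1r. Qed.

Lemma linZ (f : T -> T) : lin_map f -> forall a x, f (a *: x) = a *: f x.
Proof. by move=> Hf a x; have := Hf a x 0; rewrite addr0 => ->; rewrite lin0 // addr0. Qed.

Section Bi.
Variable f : T -> T -> T.
Hypothesis Hf : bilin f.
Lemma b1D x y z : f (x + y) z = f x z + f y z.
Proof. exact: (@linD (fun x => f x z) (fun a x y => Hf.1 a x y z)). Qed.
Lemma b1Z a x z : f (a *: x) z = a *: f x z.
Proof. exact: (@linZ (fun x => f x z) (fun a x y => Hf.1 a x y z)). Qed.
Lemma b2D x y z : f z (x + y) = f z x + f z y.
Proof. exact: (@linD (fun x => f z x) (fun a x y => Hf.2 a x y z)). Qed.
Lemma b2Z a x z : f z (a *: x) = a *: f z x.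
Proof. exact: (@linZ (fun x => f z x) (fun a x y => Hf.2 a x y z)). Qed.
End Bi.

Section Tri.
Variable f : T -> T -> T -> T.
Hypothesis Hf : trilin f.
Lemma t1D x y z w : f (x + y) z w = f x z w + f y z w.
Proof. case: Hf => H1 _; exact: (@linD (fun x => f x z w) (fun a x y => H1 a x y z w)). Qed.
Lemma t1Z a x z w : f (a *: x) z w = a *: f x z w.
Proof. case: Hf => H1 _; exact: (@linZ (fun x => f x z w) (fun a x y => H1 a x y z w)). Qed.
Lemma t2D x y z w : f z (x + y) w = f z x w + f z y w.
Proof. case: Hf => _ [H1 _]; exact: (@linD (fun x => f z x w) (fun a x y => H1 a x y z w)). Qed.
Lemma t2Z a x z w : f z (a *: x) w = a *: f z x w.
Proof. case: Hf => _ [H1 _]; exact: (@linZ (fun x => f z x w) (fun a x y => H1 a x y z w)). Qed.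
Lemma t3D x y z w : f z w (x + y) = f z w x + f z w y.
Proof. case: Hf => _ [_ H1]; exact: (@linD (fun x => f z w x) (fun a x y => H1 a x y z w)). Qed.
Lemma t3Z a x z w : f z w (a *: x) = a *: f z w x.
Proof. case: Hf => _ [_ H1]; exact: (@linZ (fun x => f z w x) (fun a x y => H1 a x y z w)). Qed.
End Tri.

Lemma exp1 (f g : T -> T -> T) : bilin f -> bilin g -> forall l a b w,
  f (a + l *: b) w + l *: g (a + l *: b) w = P l (f a w) (f b w + g a w) (g b w).
Proof.
move=> Hf Hg l a b w.
by rewrite /P (b1D Hf) (b1D Hg) (b1Z Hf) (b1Z Hg) !scalerDr scalerA !addrA.
Qed.

Lemma exp2 (f g : T -> T -> T) : bilin f -> bilin g -> forall l a b w,
  f w (a + l *: b) + l *: g w (a + l *: b) = P l (f w a) (f w b + g w a) (g w b).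
Proof.
move=> Hf Hg l a b w.
by rewrite /P (b2D Hf) (b2D Hg) (b2Z Hf) (b2Z Hg) !scalerDr scalerA !addrA.
Qed.

Lemma texp1 (f g : T -> T -> T -> T) : trilin f -> trilin g -> forall l a b w z,
  f (a + l *: b) w z + l *: g (a + l *: b) w z
  = P l (f a w z) (f b w z + g a w z) (g b w z).
Proof.
move=> Hf Hg l a b w z.
by rewrite /P (t1D Hf) (t1D Hg) (t1Z Hf) (t1Z Hg) !scalerDr scalerA !addrA.
Qed.

Lemma texp2 (f g : T -> T -> T -> T) : trilin f -> trilin g -> forall l a b w z,
  f w (a + l *: b) z + l *: g w (a + l *: b) z
  = P l (f w a z) (f w b z + g w a z) (g w b z).
Proof.
move=> Hf Hg l a b w z.
by rewrite /P (t2D Hf) (t2D Hg) (t2Z Hf) (t2Z Hg) !scalerDr scalerA !addrA.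
Qed.

Lemma texp3 (f g : T -> T -> T -> T) : trilin f -> trilin g -> forall l a b w z,
  f w z (a + l *: b) + l *: g w z (a + l *: b)
  = P l (f w z a) (f w z b + g w z a) (g w z b).
Proof.
move=> Hf Hg l a b w z.
by rewrite /P (t3D Hf) (t3D Hg) (t3Z Hf) (t3Z Hg) !scalerDr scalerA !addrA.
Qed.

Lemma deg1 (f g : T -> T -> T -> T) l x y z :
  f x y z + l *: g x y z = P l (f x y z) (g x y z) 0.
Proof. by rewrite /P scaler0 addr0. Qed.

Lemma PD l a b c a' b' c' :
  P l a b c + P l a' b' c' = P l (a + a') (b + b') (c + c').
Proof. by rewrite /P !scalerDr addrACA [X in X + _]addrACA. Qed.

Lemma PB l a b c a' b' c' :
  P l a b c - P l a' b' c' = P l (a - a') (b - b') (c - c').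
Proof. by rewrite /P !scalerDr !scalerN !opprD addrACA [X in X + _]addrACA. Qed.

Lemma P_eq0 l a b c : a = 0 -> b = 0 -> c = 0 -> P l a b c = 0.
Proof. by move=> -> -> ->; rewrite /P !scaler0 !addr0. Qed.

Lemma P_congr l a b c a' b' c' : a = a' -> b = b' -> c = c' -> P l a b c = P l a' b' c'.
Proof. by move=> -> -> ->. Qed.

Hypothesis h2 : (2%:R : K) != 0.

Lemma coeffs0 a b c : P 0 a b c = 0 -> P 1 a b c = 0 -> P (-1) a b c = 0 ->
  [/\ a = 0, b = 0 & c = 0].
Proof.
rewrite /P mulr0 !scale0r !addr0 => ha; rewrite ha add0r mulr1 !scale1r.
move=> /eqP; rewrite addr_eq0 => /eqP hb.
rewrite mulrNN mulr1 scale1r scaleN1r hb opprK => hc.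
have : (2%:R : K) *: c = 0 by rewrite scaler_nat mulr2n -hc add0r.
move=> h; have c0 : c = 0.
  by rewrite -[c]scale1r -(mulVf h2) -scalerA h scaler0.
by split; rewrite ?hb ?c0 ?oppr0.
Qed.

Lemma coeffsE a b c a' b' c' : P 0 a b c = P 0 a' b' c' ->
  P 1 a b c = P 1 a' b' c' -> P (-1) a b c = P (-1) a' b' c' ->
  [/\ a = a', b = b' & c = c'].
Proof.
move=> /eqP; rewrite -subr_eq0 PB => /eqP e0.
move=> /eqP; rewrite -subr_eq0 PB => /eqP e1.
move=> /eqP; rewrite -subr_eq0 PB => /eqP e2.
by have [/eqP ? /eqP ? /eqP ?] := coeffs0 e0 e1 e2; split; apply/eqP; rewrite -subr_eq0.
Qed.

Lemma lin_comb (a l : K) (p q r s : T) :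
  a *: p + q + l *: (a *: r + s) = a *: (p + l *: r) + (q + l *: s).
Proof.
rewrite !scalerDr !scalerA (mulrC l a) !addrA; congr (_ + _).
by rewrite addrAC.
Qed.

Lemma bilin_def (f g : T -> T -> T) l : bilin f -> bilin g -> bilin (fun x y => f x y + l *: g x y).
Proof.
move=> [F1 F2] [G1 G2]; split=> a x y z; by rewrite /= ?F1 ?G1 ?F2 ?G2 lin_comb.
Qed.

Lemma trilin_def (f g : T -> T -> T -> T) l : trilin f -> trilin g ->
  trilin (fun x y z => f x y z + l *: g x y z).
Proof.
move=> [F1 [F2 F3]] [G1 [G2 G3]]; split; [|split]=> a x y z w /=;
  by rewrite ?F1 ?G1 ?F2 ?G2 ?F3 ?G3 lin_comb.
Qed.

End Aux.

Section Re.
Variable V : zmodType.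
Lemma re3 (a1 a2 a3 b1 b2 b3 w1 w2 w3 : V) :
  ((a1+b1)+w1) + ((a2+b2)+w2) + ((a3+b3)+w3)
  = ((w1+a2)+b1) + ((w2+a3)+b2) + ((w3+a1)+b3).
Proof. rewrite !addrA. rewrite [LHS](ACl (3*4*2*6*7*5*9*1*8)). by []. Qed.
Lemma re4 (c1 c2 c3 d1 d2 d3 : V) :
  (c1+d1)+(c2+d2)+(c3+d3) = (c2+d1)+(c3+d2)+(c1+d3).
Proof. rewrite !addrA. by rewrite [LHS](ACl (3*2*5*4*1*6)). Qed.
Lemma re5 (g1 h1 g2 h2 : V) : (g1+h1)+(g2+h2) = h1+h2+g2+g1.
Proof. rewrite !addrA. by rewrite [LHS](ACl (2*4*3*1)). Qed.
Lemma re6 (g1 h1 g2 h2 g3 h3 : V) :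
  (g1+h1)+(g2+h2)+(g3+h3) = h1+h2+h3+g1+g2+g3.
Proof. rewrite !addrA. by rewrite [LHS](ACl (2*4*6*1*3*5)). Qed.
End Re.

Ltac expd Hbr Hnu Htr Hom tr omega :=
  rewrite ?(exp1 Hbr Hnu) ?(exp2 Hbr Hnu) ?(texp1 Htr Hom) ?(texp2 Htr Hom)
          ?(texp3 Htr Hom) ?(deg1 tr omega) ?PD.

Theorem theorem3p1 (K : closedFieldType)
  (hchar2 : (2%:R : K) != 0) (hchar3 : (3%:R : K) != 0)
  (T : lmodType K) (alpha : T -> T) (br : T -> T -> T) (tr : T -> T -> T -> T)
  (nu : T -> T -> T) (omega : T -> T -> T -> T) :
  is_HLYA alpha br tr -> bilin nu -> trilin omega ->
  (gen_inf_deformation alpha br tr nu omega <->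
   is_HLYA_deftype alpha nu omega /\ cocycle23_adj alpha br tr nu omega).
Proof.
rewrite /gen_inf_deformation /is_HLYA /is_HLYA_deftype /cocycle23_adj /cocycle23
  /adj_rho /adj_D /adj_theta /HLY01 /HLY02 /HLY1 /HLY2 /HLY3 /HLY3' /HLY4 /HLY5 /HLY6.
move=> [Ha Hbr Htr [H01 H02 H1 H2] [H3 H4 H5 H6]] Hnu Hom.
have brN a b : - br a b = br b a.
  by apply/esym/eqP; rewrite -addr_eq0 H1.
have trN a b c : - tr a b c = tr b a c.
  by apply/esym/eqP; rewrite -addr_eq0 H2.
split.
- move=> Hdef.
  have [_ _ _ [a01 a02 a1 a2] [a3 a4 a5 a6]] := Hdef 0.
  have [_ _ _ [b01 b02 b1 b2] [b3 b4 b5 b6]] := Hdef 1.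
  have [_ _ _ [c01 c02 c1 c2] [c3 c4 c5 c6]] := Hdef (-1).
  cbv beta in *.
  have N01 x y : alpha (nu x y) = nu (alpha x) (alpha y).
    by have := b01 x y; rewrite (linD Ha) (linZ Ha) !scale1r H01 => /addrI.
  have N02 x y z : alpha (omega x y z) = omega (alpha x) (alpha y) (alpha z).
    by have := b02 x y z; rewrite (linD Ha) (linZ Ha) !scale1r H02 => /addrI.
  have N1 x y : nu x y + nu y x = 0.
    by have := b1 x y; rewrite !scale1r addrACA H1 add0r.
  have N2 x y z : omega x y z + omega y x z = 0.
    by have := b2 x y z; rewrite !scale1r addrACA H2 add0r.
  split.
  + split => //; split => //.
    * move=> x1 x2 x3; move: (a3 x1 x2 x3) (b3 x1 x2 x3) (c3 x1 x2 x3).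
      expd Hbr Hnu Htr Hom tr omega => e0 e1 e2.
      have [_ _ k] := coeffs0 hchar2 e0 e1 e2; by rewrite !addr0 in k.
    * move=> x1 x2 x3 y1; move: (a4 x1 x2 x3 y1) (b4 x1 x2 x3 y1) (c4 x1 x2 x3 y1).
      expd Hbr Hnu Htr Hom tr omega => e0 e1 e2.
      by have [_ _ k] := coeffs0 hchar2 e0 e1 e2.
    * move=> x1 x2 y1 y2; move: (a5 x1 x2 y1 y2) (b5 x1 x2 y1 y2) (c5 x1 x2 y1 y2).
      expd Hbr Hnu Htr Hom tr omega => e0 e1 e2.
      by have [_ _ k] := coeffsE hchar2 e0 e1 e2.
    * move=> x1 x2 y1 y2 y3; move: (a6 x1 x2 y1 y2 y3) (b6 x1 x2 y1 y2 y3) (c6 x1 x2 y1 y2 y3).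
      expd Hbr Hnu Htr Hom tr omega => e0 e1 e2.
      by have [_ _ k] := coeffsE hchar2 e0 e1 e2.
  + split.
    * by move=> x y; apply/eqP; rewrite -addr_eq0 N1.
    * by move=> x y z; apply/eqP; rewrite -addr_eq0 N2.
    * by move=> x y; rewrite N01.
    * by move=> x y z; rewrite N02.
    split.
    * move=> x1 x2 x3; move: (a3 x1 x2 x3) (b3 x1 x2 x3) (c3 x1 x2 x3).
      expd Hbr Hnu Htr Hom tr omega => e0 e1 e2.
      have [_ k _] := coeffs0 hchar2 e0 e1 e2; by rewrite !brN -re3.
    * move=> x1 x2 x3 y1; move: (a4 x1 x2 x3 y1) (b4 x1 x2 x3 y1) (c4 x1 x2 x3 y1).
      expd Hbr Hnu Htr Hom tr omega => e0 e1 e2.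
      have [_ k _] := coeffs0 hchar2 e0 e1 e2; by rewrite -re4.
    * move=> x1 x2 y1 y2; move: (a5 x1 x2 y1 y2) (b5 x1 x2 y1 y2) (c5 x1 x2 y1 y2).
      expd Hbr Hnu Htr Hom tr omega => e0 e1 e2.
      have [_ k _] := coeffsE hchar2 e0 e1 e2.
      by rewrite !brN addrC k re5.
    * move=> x1 x2 y1 y2 y3; move: (a6 x1 x2 y1 y2 y3) (b6 x1 x2 y1 y2 y3) (c6 x1 x2 y1 y2 y3).
      expd Hbr Hnu Htr Hom tr omega => e0 e1 e2.
      have [_ k _] := coeffsE hchar2 e0 e1 e2.
      by rewrite !trN addrC k re6.
- move=> [[_ _ _ [N01 N02 N1 N2] [N3 N4 N5 N6]] [Sn So Cn Co [C1 C2 C3 C4]]] lam.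
  split.
  + exact: Ha.
  + exact: bilin_def.
  + exact: trilin_def.
  + split.
    * by move=> x y; rewrite (linD Ha) (linZ Ha) H01 N01.
    * by move=> x y z; rewrite (linD Ha) (linZ Ha) H02 N02.
    * by move=> x y; rewrite addrACA H1 -scalerDr N1 scaler0 addr0.
    * by move=> x y z; rewrite addrACA H2 -scalerDr N2 scaler0 addr0.
  + split.
    * move=> x1 x2 x3; expd Hbr Hnu Htr Hom tr omega.
      apply: P_eq0; first exact: H3.
      - by have := C1 x1 x2 x3; rewrite !brN -re3.
      - by rewrite !addr0; exact: N3.
    * move=> x1 x2 x3 y1; expd Hbr Hnu Htr Hom tr omega.
      apply: P_eq0; first exact: H4.
      - by have := C2 x1 x2 x3 y1; rewrite -re4.
      - exact: N4.
    * move=> x1 x2 y1 y2; expd Hbr Hnu Htr Hom tr omega.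
      apply: P_congr; first exact: H5.
      - by have := C3 x1 x2 y1 y2; rewrite !brN addrC re5.
      - exact: N5.
    * move=> x1 x2 y1 y2 y3; expd Hbr Hnu Htr Hom tr omega.
      apply: P_congr; first exact: H6.
      - by have := C4 x1 x2 y1 y2 y3; rewrite !trN addrC re6.
      - exact: N6.
Qed.
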